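(* Let $p$ be an odd prime, $\sigma>0$ a real number, and $L\in\mathbb{F}_p^{d\times c}$ a matrix with pairwise distinct columns. Then there exists a $\sigma$-admissible matrix $S\in\mathbb{F}_p^{d\times c'}$ obtained from $L$ by deleting some columns (possibly the empty matrix, with $c'=0$) such that \[ c'\geq \frac{1}{\log_2 p}\left(\log_2 c-\sigma-(\sigma+d)\,H\!\left(\frac{\sigma}{\sigma+d}\right)\right)-1 . \]
   Context: For $x,\xi\in\mathbb{F}_p^{m}$, $\langle x,\xi\rangle$ denotes the integer representative in $(-p/2,p/2]$ of $\sum_t x_t\xi_t\in\mathbb{F}_p$. A matrix $S\in\mathbb{F}_p^{d\times m}$ with rows $r_1,\dots,r_d$ is called $\sigma$-admissible if $\sum_{i=1}^d\langle r_i,\xi\rangle^2>\sigma$ for every nonzero $\xi\in\mathbb{F}_p^m$. $H(q)=-q\log_2 q-(1-q)\log_2(1-q)$ is the binary entropy function. *)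

(* Defs.v *)
From HB Require Import structures.
From mathcomp Require Import all_boot all_order all_algebra.
From mathcomp Require Import all_classical all_reals all_analysis.
Set Implicit Arguments. Unset Strict Implicit. Unset Printing Implicit Defensive.
Import Order.TTheory GRing.Theory Num.Theory.
Local Open Scope ring_scope.

(* Centered integer representative in (-p/2, p/2] of an element of F_p
   (p odd): the residue n in [0,p) is kept if 2n <= p, otherwise n - p. *)
Definition crep (p : nat) (a : 'F_p) : int :=
  let n := nat_of_ord a in
  if (2 * n <= p)%N then n%:Z else n%:Z - p%:Z.

Definition cip (p m : nat) (x xi : 'rV['F_p]_m) : int :=
  crep (\sum_(t < m) x 0 t * xi 0 t).

Definition admissible (R : realType) (p d m : nat) (sigma : R)
    (S : 'M['F_p]_(d, m)) : Prop :=
  forall xi : 'rV['F_p]_m, xi != 0 ->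
    sigma < ((\sum_(i < d) (cip (row i S) xi) ^+ 2)%:~R : R).

Definition log2 (R : realType) (x : R) : R := ln x / ln 2.

Definition Hbin (R : realType) (q : R) : R :=
  - q * log2 q - (1 - q) * log2 (1 - q).

(* Main.v *)
Require Import Defs.
From HB Require Import structures.
From mathcomp Require Import all_boot all_order all_algebra.
From mathcomp Require Import all_classical all_reals all_analysis.
From mathcomp Require Import zify ring lra.
Import Order.TTheory GRing.Theory Num.Theory.
Set Implicit Arguments. Unset Strict Implicit. Unset Printing Implicit Defensive.
Local Open Scope ring_scope.

Definition norm2 (p d : nat) (v : {ffun 'I_d -> 'F_p}) : int :=
  \sum_(i < d) crep (v i) ^+ 2.

Definition Lv (p d c : nat) (L : 'M['F_p]_(d, c)) (xi : {ffun 'I_c -> 'F_p}) :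
  {ffun 'I_d -> 'F_p} := [ffun i => \sum_(j < c) L i j * xi j].

Definition Ball (R : realType) (p d : nat) (sigma : R) : {set {ffun 'I_d -> 'F_p}} :=
  [set b | ((norm2 b)%:~R : R) <= sigma].

Definition Good (R : realType) (p d c : nat) (sigma : R) (L : 'M['F_p]_(d, c))
  (A : {set 'I_c}) : Prop :=
  forall xi : {ffun 'I_c -> 'F_p}, (forall j, j \notin A -> xi j = 0) -> xi != 0 ->
    sigma < ((norm2 (Lv L xi))%:~R : R).

Definition SA (p c : nat) (A : {set 'I_c}) : {set {ffun 'I_c -> 'F_p}} :=
  [set xi : {ffun 'I_c -> 'F_p} | [forall j, (j \notin A) ==> (xi j == 0)]].

Lemma card_SA (p c : nat) (A : {set 'I_c}) : prime p -> #|SA p A| = (p ^ #|A|)%N.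
Proof.
move=> pp; have -> : (p ^ #|A| = #|[set: 'F_p]| ^ #|A|)%N by rewrite cardsT card_Fp.
rewrite -(card_pffun_on 0 A [set: 'F_p]).
apply: eq_card => xi; rewrite inE; apply/forallP/pffun_onP => [H|[H1 H2] j].
  split; last by move=> ?; rewrite inE.

  apply/fintype.subsetP => j; rewrite inE; apply: contraR => jA.
  by have /implyP/(_ jA)/eqP-> := H j; rewrite eqxx.
apply/implyP => jA; apply: contraR jA => xj.
by move/fintype.subsetP: H1; apply; rewrite inE.
Qed.

Definition colf (p d c : nat) (L : 'M['F_p]_(d, c)) (j : 'I_c) : {ffun 'I_d -> 'F_p} :=
  [ffun i => L i j].

Definition Phi (p d c : nat) (L : 'M['F_p]_(d, c))
  (x : 'F_p * ({ffun 'I_c -> 'F_p} * {ffun 'I_d -> 'F_p})) : {ffun 'I_d -> 'F_p} :=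
  [ffun i => x.1^-1 * (x.2.2 i - Lv L x.2.1 i)].

Lemma crep0 (p : nat) : crep (0 : 'F_p) = 0.
Proof. by rewrite /crep /=. Qed.

Lemma norm2_0 (p d : nat) : norm2 (0 : {ffun 'I_d -> 'F_p}) = 0.
Proof. by rewrite /norm2 big1 // => i _; rewrite ffunE crep0 expr0n. Qed.

Lemma extend (R : realType) (p d c : nat) (sigma : R) (L : 'M['F_p]_(d, c))
  (A : {set 'I_c}) :
  prime p -> 0 < sigma -> (forall j k : 'I_c, col j L = col k L -> j = k) ->
  Good sigma L A -> (p ^ #|A|.+1 * #|Ball p d sigma| < c)%N ->
  exists j, j \notin A /\ Good sigma L (j |: A).
Proof.
move=> pp s0 Linj GA Hc.
pose Dom := finset.setX [set: 'F_p] (finset.setX (SA p A) (Ball p d sigma)).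
pose W := Phi L @: Dom.
have cinj : injective (colf L).
  move=> j k /ffunP e; apply: Linj; apply/matrixP => i l.
  by have := e i; rewrite !ffunE !mxE.
have [j Wj] : exists j, colf L j \notin W.
  apply/existsP; rewrite -negb_forall; apply/negP => /forallP H.
  have : (#|colf L @: [set: 'I_c]| <= #|Dom|)%N.
    apply: leq_trans (leq_imset_card (Phi L) Dom).
    apply: subset_leq_card; apply/fintype.subsetP => w /imsetP [j _ ->]; exact: H.
  rewrite card_imset // cardsT card_ord !cardsX cardsT card_Fp // card_SA //.
  by rewrite mulnA -expnS leqNgt Hc.
have Wmem : forall (a : 'F_p) xi b, a != 0 -> xi \in SA p A -> b \in Ball p d sigma ->
    colf L j = Phi L (a, (xi, b)) -> False.
  move=> a xi b a0 xiA bB e; move/negP: Wj; apply; rewrite e.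

  by apply: imset_f; rewrite /Dom !finset.in_setX /= xiA bB finset.in_setT.
exists j; split.
  apply/negP => jA.
  apply: (Wmem 1 [ffun t => if t == j then -1 else 0] 0) => //.
  - rewrite inE; apply/forallP => t; apply/implyP => tA.
    rewrite ffunE; case: (t =P j) => [tj|_]; last exact: eqxx.
    by rewrite tj jA in tA.
  - by rewrite inE norm2_0 ltW.
  apply/ffunP => i; rewrite !ffunE invr1 mul1r sub0r.
  rewrite /= (bigD1 j) //= ffunE eqxx mulrN1 big1 ?addr0 ?opprK // => t /negbTE tj.
  by rewrite ffunE tj mulr0.
move=> xi Hsupp xi0.
pose a := xi j.
pose xi0' := [ffun t : 'I_c => (if t == j then 0 else xi t : 'F_p)].
have eL : forall i, Lv L xi i = Lv L xi0' i + L i j * a.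
  move=> i; rewrite !ffunE (bigD1 j) //= [in RHS](bigD1 j) //= ffunE eqxx mulr0 add0r addrC.
  congr (_ + _); apply: eq_bigr => t /negbTE tj; by rewrite ffunE tj.
have xi0A : xi0' \in SA p A.
  rewrite inE; apply/forallP => t; apply/implyP => tA; rewrite ffunE.
  case: ifP => [_|tj]; first exact: eqxx.
  by apply/eqP; apply: Hsupp; rewrite !inE negb_or tj tA.
have [a0|a0] := eqVneq a 0.
  have -> : xi = xi0'.
    by apply/ffunP => t; rewrite ffunE; case: eqP => // ->.
  apply: GA => [t tA|]; first by move: xi0A; rewrite inE => /forallP/(_ t); rewrite tA => /eqP.
  have -> : xi0' = xi by apply/ffunP => t; rewrite ffunE; case: eqP => // ->.
  exact: xi0.
rewrite ltNge; apply/negP => Hle.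
apply: (Wmem a xi0' (Lv L xi) a0 xi0A); first by rewrite inE.
apply/ffunP => i; have := eL i; rewrite !ffunE /= => ->.
by rewrite addrAC subrr add0r mulrC mulfK.
Qed.

Lemma greedy (R : realType) (p d c : nat) (sigma : R) (L : 'M['F_p]_(d, c)) :
  prime p -> 0 < sigma -> (forall j k : 'I_c, col j L = col k L -> j = k) ->
  exists A, Good sigma L A /\ (c <= p ^ #|A|.+1 * #|Ball p d sigma|)%N.
Proof.
move=> pp s0 Linj.
have H : forall n, exists A, Good sigma L A /\
    ((n <= #|A|)%N || (c <= p ^ #|A|.+1 * #|Ball p d sigma|)%N).
  elim=> [|n [A [GA HA]]].
    exists finset.set0; split => // xi H0 xi0; exfalso; move/negP: xi0; apply.
    by apply/eqP/ffunP => j; rewrite ffunE H0 // inE.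
  have [Hc|Hc] := leqP c (p ^ #|A|.+1 * #|Ball p d sigma|).
    by exists A; rewrite Hc orbT.
  move: HA; rewrite [(c <= _)%N]leqNgt Hc orbF => nA.
  have [j [jA Gj]] := extend pp s0 Linj GA Hc.
  exists (j |: A); split => //.
  by rewrite cardsU1 jA /= add1n ltnS nA.
have [A [GA]] := H c.+1.
have : (#|A| <= c)%N by rewrite -[X in (_ <= X)%N]card_ord max_card.
by case: leqP => // _ _ /=; exists A.
Qed.

Lemma transfer (R : realType) (p d c : nat) (sigma : R) (L : 'M['F_p]_(d, c))
  (A : {set 'I_c}) : Good sigma L A ->
  admissible sigma (colsub (fun i : 'I_#|A| => enum_val i) L).
Proof.
move=> GA xv xv0.
pose f := fun i : 'I_#|A| => (enum_val i : 'I_c).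
pose xi := [ffun j : 'I_c => \sum_(t < #|A|) (if f t == j then xv 0 t else 0)].
have eq1 : forall i, \sum_(t < #|A|) (row i (colsub f L)) 0 t * xv 0 t = Lv L xi i.
  move=> i; rewrite ffunE.
  under [RHS]eq_bigr => j _ do rewrite ffunE mulr_sumr.
  rewrite exchange_big /=; apply: eq_bigr => t _.
  rewrite !mxE (bigD1 (f t)) //= eqxx big1 ?addr0 // => j /negbTE.
  by rewrite eq_sym => ->; rewrite mulr0.
have supp : forall j, j \notin A -> xi j = 0.
  move=> j jA; rewrite ffunE big1 // => t _.
  case: eqP => // ft; move: jA; rewrite -ft /f enum_valP //.
have xin0 : xi != 0.
  apply: contra xv0 => /eqP xi0; apply/eqP/rowP => t; rewrite mxE.
  have := congr1 (fun g : {ffun 'I_c -> 'F_p} => g (f t)) xi0.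
  rewrite /= !ffunE (bigD1 t) //= eqxx big1 ?addr0 // => s st.
  by case: eqP => // /enum_val_inj/eqP; rewrite (negbTE st).
have := GA xi supp xin0.
congr (_ < _); congr (_%:~R); apply: eq_bigr => i _.
by rewrite /cip eq1.
Qed.


Lemma geomT (R : realType) (y : R) (m : nat) : 0 <= y < 1 ->
  \sum_(n < m) y ^+ n <= (1 - y)^-1.
Proof.
move=> /andP [y0 y1]; have hu : (1 - y)^-1 * (1 - y) = 1 by rewrite mulVf // subr_eq0 gt_eqF.
have u0 : 0 <= (1 - y)^-1 by rewrite invr_ge0 subr_ge0 ltW.
elim: m => [|m IH]; first by rewrite big_ord0.
rewrite big_ord_recl expr0.
under eq_bigr => i _ do rewrite lift0 exprS.
rewrite -mulr_sumr.
have : y * \sum_(i < m) y ^+ i <= y * (1 - y)^-1 by apply: ler_wpM2l.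
lra.
Qed.

Lemma geomS (R : realType) (y : R) (m : nat) : 0 <= y < 1 ->
  \sum_(n < m) y ^+ (m - n) <= y * (1 - y)^-1.
Proof.
move=> /andP [y0 y1]; have hu : (1 - y)^-1 * (1 - y) = 1 by rewrite mulVf // subr_eq0 gt_eqF.
have u0 : 0 <= (1 - y)^-1 by rewrite invr_ge0 subr_ge0 ltW.
elim: m => [|m IH]; first by rewrite big_ord0 mulr_ge0.
rewrite big_ord_recr /= subSnn expr1.
under eq_bigr => i _ do rewrite subSn ?exprS 1?ltnW //.
rewrite -mulr_sumr.
have : y * \sum_(i < m) y ^+ (m - i) <= y * (y * (1 - y)^-1) by apply: ler_wpM2l.
nra.
Qed.


Lemma absdiff (n p : nat) : (n <= p)%N -> `|(n%:Z - p%:Z)|%N = (p - n)%N.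
Proof. by move=> np; rewrite -{1}(subnK np) PoszD opprD addrA addrAC subrr add0r abszN. Qed.

Lemma ord_lt_eq (m p : nat) (a : 'I_m) : m = p -> (val a < p)%N.
Proof. by move=> <-; exact: ltn_ord. Qed.

Lemma sumFp (R : realType) (p : nat) (y : R) : prime p -> 0 <= y < 1 ->
  \sum_(a : 'F_p) y ^+ `|crep a|%N <= (1 + y) * (1 - y)^-1.
Proof.
move=> pp hy; have /andP [y0 y1] := hy.
apply: (@le_trans _ _ (\sum_(a : 'F_p) (y ^+ (val a) + y ^+ (p - val a)))).
  apply: ler_sum => a _; rewrite /crep.
  have ap : (val a < p)%N by apply: ord_lt_eq; exact: Fp_cast.
  case: ifP => _.
    by rewrite lerDl exprn_ge0.
  have -> : `|(val a)%:Z - p%:Z|%N = (p - val a)%N.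
    exact: absdiff (ltnW ap).
  by rewrite lerDr exprn_ge0.
have gen : forall m, m = p ->
    \sum_(a < m) (y ^+ (val a) + y ^+ (p - val a)) <= (1 + y) * (1 - y)^-1.
  move=> m ->; rewrite big_split /= mulrDl mul1r; apply: lerD.
    exact: geomT.
  exact: geomS.
exact: (gen _ (Fp_cast pp)).
Qed.

Lemma abs_le_sqr (z : int) : ((`|z|%N)%:Z <= z ^+ 2).
Proof.
have -> : z ^+ 2 = ((`|z|%N ^ 2)%N)%:Z by rewrite -abszX -[LHS]gez0_abs ?sqr_ge0.
by rewrite lez_nat; case: (absz z) => // n; rewrite expnS; apply: leq_pmulr.
Qed.

Lemma ball_main (R : realType) (p d : nat) (sigma y : R) : prime p -> 0 < y < 1 ->
  (#|Ball p d sigma|%:R : R) * expR (sigma * ln y) <=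
  (\sum_(a : 'F_p) y ^+ `|crep a|%N) ^+ d.
Proof.
move=> pp /andP [y0 y1].
have lny : ln y < 0 by apply: ln_lt0; rewrite y0 y1.
have -> : (\sum_(a : 'F_p) y ^+ `|crep a|%N) ^+ d =
    \prod_(i < d) (\sum_(a : 'F_p) y ^+ `|crep a|%N) by rewrite prodr_const card_ord.
rewrite mulr_natl -sumr_const bigA_distr_bigA /=.
apply: (@le_trans _ _ (\sum_(v in Ball p d sigma) \prod_(i < d) y ^+ `|crep (v i)|%N)).
  apply: ler_sum => v; rewrite inE => vB.
  rewrite prodrXr -[y in y ^+ _](@lnK _ y) ?posrE // -expRM_natl ler_expR.
  set N := (\sum_(i < d) _)%N.
  suff : (N%:R : R) <= sigma by nra.
  apply: le_trans vB; rewrite /norm2 /N natr_sum rmorph_sum /=.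
  apply: ler_sum => i _.
  have := abs_le_sqr (crep (v i)).
  rewrite -(ler_int R) => h; apply: le_trans h; by rewrite pmulrn.
rewrite [X in _ <= X](bigID (fun v => v \in Ball p d sigma)) /= lerDl.
by apply: sumr_ge0 => v _; apply: prodr_ge0 => i _; apply: exprn_ge0; apply: ltW.
Qed.

Lemma ball_bound (R : realType) (p d : nat) (sigma : R) : prime p -> 0 < sigma ->
  ln (#|Ball p d sigma|%:R : R) <=
  sigma * ln 2 + (sigma + d%:R) * Hbin (sigma / (sigma + d%:R)) * ln 2.
Proof.
move=> pp s0.
have sd0 : 0 < sigma + d%:R by rewrite ltr_wpDr.
set q := sigma / (sigma + d%:R).
have q0 : 0 < q by rewrite divr_gt0.
have q1 : q <= 1 by rewrite ler_pdivrMr // mul1r lerDl ler0n.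
have ln2 : 0 < ln (2 : R) by apply: ln_gt0; rewrite ltr1n.
set y := q / 2.
have y0 : 0 < y by rewrite divr_gt0.
have y1 : y < 1 by rewrite ltr_pdivrMr // mul1r; apply: le_lt_trans q1 _; rewrite ltr1n.
have y01 : 0 < y < 1 by rewrite y0 y1.
set G := \sum_(a : 'F_p) y ^+ `|crep a|%N.
have G1 : 1 <= G.
  rewrite /G (bigD1 (0 : 'F_p)) //= {1}/crep /= expr0 lerDl.
  by apply: sumr_ge0 => a _; apply: exprn_ge0; apply: ltW.
have K1 : (0 < #|Ball p d sigma|)%N.
  by rewrite card_gt0; apply/set0Pn; exists 0; rewrite inE norm2_0 ltW.
have M := ball_main d sigma pp y01.
have L1 : ln (#|Ball p d sigma|%:R : R) + sigma * ln y <= d%:R * ln G.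
  have Kp : (0 : R) < #|Ball p d sigma|%:R by rewrite ltr0n.
  rewrite -[sigma * ln y]expRK -lnM ?posrE ?expR_gt0 //.
  have G0 : 0 < G by apply: lt_le_trans G1.
  rewrite [d%:R * _]mulr_natl -lnXn //.
  by rewrite ler_ln ?posrE ?exprn_gt0 ?mulr_gt0 ?expR_gt0.
have lny : ln y = ln q - ln 2 by rewrite /y ln_div ?posrE.
have [d0|dpos] := eqVneq d 0%N.
  have q1' : q = 1 by rewrite /q d0 addr0 divff // gt_eqF.
  rewrite /Hbin q1' subrr mul0r /log2 ln1 mul0r mulr0 subr0 mulr0 mul0r addr0.
  move: L1; rewrite d0 mul0r lny q1' ln1. lra.
have qlt1 : q < 1.
  rewrite ltr_pdivrMr // mul1r ltrDl ltr0n lt0n; exact: dpos.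
have Gle : G <= (1 - q)^-1.
  have hy : 0 <= y < 1 by rewrite (ltW y0) y1.
  apply: le_trans (sumFp pp hy) _.
  have h1 : 0 < 1 - y by rewrite subr_gt0.
  have h2 : 0 < 1 - q by rewrite subr_gt0.
  rewrite ler_pdivrMr // ler_pdivlMl //.
  rewrite /y; have : 0 <= q * q by rewrite mulr_ge0 // ltW. nra.
have lnG : ln G <= - ln (1 - q).
  rewrite -lnV ?posrE ?subr_gt0 //.
  by rewrite ler_ln ?posrE ?invr_gt0 ?subr_gt0 // (lt_le_trans _ G1).
have E1 : (sigma + d%:R) * q = sigma by rewrite /q mulrC divfK // gt_eqF.
have E2 : (sigma + d%:R) * (1 - q) = d%:R by rewrite mulrBr mulr1 E1; lra.
have E : (sigma + d%:R) * Hbin q * ln 2 =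
    - ((sigma + d%:R) * q) * ln q - ((sigma + d%:R) * (1 - q)) * ln (1 - q).
  by rewrite /Hbin /log2; field; rewrite gt_eqF.
rewrite E E1 E2.
have : d%:R * ln G <= d%:R * (- ln (1 - q)) by apply: ler_wpM2l; rewrite ?ler0n.
move: L1; rewrite lny; lra.
Qed.

Lemma enum_val_incr (c : nat) (A : {set 'I_c}) (i j : 'I_#|A|) :
  (i < j)%N -> (enum_val i < enum_val j)%N.
Proof.
move=> ij.
have tr : transitive (relpre (val : 'I_c -> nat) ltn).
  by move=> x y z /=; apply: ltn_trans.
have srt : sorted (relpre val ltn) (enum A).
  have e : enum A = seq.filter (mem A) (enum 'I_c).
    by rewrite {1}/enum_mem -enumT.
  rewrite e; apply: sorted_filter => //.
  by rewrite -sorted_map val_enum_ord iota_ltn_sorted.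
have := sorted_ltn_nth tr (enum_default i) srt.
move=> /(_ i j); rewrite !inE -cardE !ltn_ord => /(_ isT isT ij).
by rewrite /= -!enum_val_nth.
Qed.

Theorem lemma4p3 (R : realType) (p d c : nat) (sigma : R)
    (L : 'M['F_p]_(d, c)) :
  prime p -> odd p -> 0 < sigma ->
  (forall j k : 'I_c, col j L = col k L -> j = k) ->
  exists (c' : nat) (f : 'I_c' -> 'I_c),
    (forall i j : 'I_c', (i < j)%N -> (f i < f j)%N) /\
    admissible sigma (colsub f L) /\
    (log2 (c%:R : R) - sigma
       - (sigma + d%:R) * Hbin (sigma / (sigma + d%:R))) / log2 (p%:R : R) - 1
      <= (c'%:R : R).
Proof.
move=> pp podd s0 Linj.
have [A [GA Hc]] := greedy pp s0 Linj.
exists #|A|, (fun i : 'I_#|A| => enum_val i); split; first exact: enum_val_incr.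
split; first exact: transfer.
have KB := ball_bound d pp s0.
set h := (sigma + d%:R) * Hbin (sigma / (sigma + d%:R)).
move: KB; set K := #|Ball p d sigma| => KB.
have K1 : (0 < K)%N.
  by rewrite card_gt0; apply/set0Pn; exists 0; rewrite inE norm2_0 ltW.
have p1 : (1 : R) < p%:R by rewrite ltr1n prime_gt1.
have lp : 0 < ln (p%:R : R) by apply: ln_gt0.
have ln2 : 0 < ln (2 : R) by apply: ln_gt0; rewrite ltr1n.
have lK : 0 <= ln (K%:R : R) by apply: ln_ge0; rewrite ler1n.
have lc : ln (c%:R : R) <= (#|A|.+1)%:R * ln (p%:R : R) + ln (K%:R : R).
  have [c0|cpos] := eqVneq c 0%N.
    have -> : (c%:R : R) = 0 by rewrite c0.
    rewrite ln0 //; apply: addr_ge0 => //; apply: mulr_ge0 => //; exact: ltW.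
  have : (c%:R : R) <= (p%:R : R) ^+ #|A|.+1 * K%:R.
    by rewrite -natrX -natrM ler_nat.
  have pp0 : (0 : R) < p%:R by rewrite ltr0n prime_gt0.
  have pk0 : (0 : R) < p%:R ^+ #|A|.+1 by rewrite exprn_gt0.
  have K0 : (0 : R) < K%:R by rewrite ltr0n.
  have c0' : (0 : R) < c%:R by rewrite ltr0n lt0n.
  rewrite -ler_ln ?posrE ?mulr_gt0 //.
  rewrite lnM ?posrE // lnXn // mulr_natl; exact.
have -> : (log2 (c%:R : R) - sigma - h) / log2 (p%:R : R) - 1 =
    (ln (c%:R : R) - sigma * ln 2 - h * ln 2) / ln (p%:R : R) - 1.
  by rewrite /log2; field; rewrite !gt_eqF.
rewrite lerBlDr ler_pdivrMr //.
move: lc KB; rewrite /h -addn1 natrD; lra.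
Qed.
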